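(* Let $X,Y$ be real Hilbert spaces, let $A\in\mathcal{L}(X,Y)$ be a compact operator with singular system $\{(\sigma_i,u_i,v_i)\}_i$, and let $\alpha>0$. For $B\in\mathcal{L}(X,Y)$ and $y\in Y$ let $$x(B,y)=\operatorname*{argmin}_{x\in X}\tfrac12\|Bx-y\|^2+\tfrac{\alpha}{2}\|x\|^2=(B^*B+\alpha I)^{-1}B^*y,$$ and let $F(B)=\tfrac12\|A\,x(B,y^\delta)-y^\delta\|^2$. Consider the class $\mathcal{B}$ of operators of the form $B=\sum_i \beta_i\, v_i u_i^*$ with $\beta_i\ge 0$ and $\sup_i\beta_i<\infty$. Then for every $y^\delta\in Y$ the operator $B_\alpha=\sum_i\beta_i^\alpha v_iu_i^*$ with $$\beta_i^\alpha=\begin{cases}\frac{\sigma_i}{2}+\sqrt{\frac{\sigma_i^2}{4}-\alpha}, & \sigma_i\ge 2\sqrt{\alpha},\\[2pt] \sqrt{\alpha}, & \sigma_i<2\sqrt{\alpha},\end{cases}$$ belongs to $\mathcal{B}$ and is a global minimizer of $F$ over $\mathcal{B}$.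
   Context: A singular system of the compact operator $A$ means: $\sigma_i>0$, $\{u_i\}$ orthonormal in $X$, $\{v_i\}$ orthonormal in $Y$, $Au_i=\sigma_i v_i$, $A^*v_i=\sigma_i u_i$, and $A=\sum_i\sigma_i v_iu_i^*$. For $v\in Y$, $u\in X$, $v u^*\in\mathcal{L}(X,Y)$ denotes the rank-one map $x\mapsto\langle u,x\rangle_X\, v$. $I$ is the identity on $X$. *)

(* Defs.v *)
From HB Require Import structures.
From mathcomp Require Import all_boot all_order all_algebra finmap.
From mathcomp Require Import boolp classical_sets functions reals topology normedtype.
Set Implicit Arguments. Unset Strict Implicit. Unset Printing Implicit Defensive.
Import Order.TTheory GRing.Theory Num.Theory.
Import numFieldNormedType.Exports.
Local Open Scope classical_set_scope.
Local Open Scope ring_scope.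

Section Defs.
Variable R : realType.

(* ip is a real inner product on V inducing the norm of V
   (so a complete V with such an ip is a real Hilbert space). *)
Definition is_inner_product (V : normedModType R) (ip : V -> V -> R) :=
  [/\ forall x y, ip x y = ip y x,
      forall (a : R) x y z, ip (a *: x + y) z = a * ip x z + ip y z
    & forall x, ip x x = `|x| ^+ 2].

Definition orthonormal (V : normedModType R) (ip : V -> V -> R)
  (I : Type) (e : I -> V) :=
  forall i j, ip (e i) (e j) = if `[< i = j >] then 1 else 0.

(* A^* w = z, i.e. <A x, w>_Y = <x, z>_X for all x *)
Definition adjoint_maps (X Y : normedModType R) (ipX : X -> X -> R)
  (ipY : Y -> Y -> R) (A : X -> Y) (w : Y) (z : X) :=
  forall x, ipY (A x) w = ipX x z.

Definition compact_operator (X Y : normedModType R) (A : X -> Y) :=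
  forall S : set X, bounded_set S -> compact (closure (A @` S)).

(* unconditional summation over an arbitrary index type:
   limit of finite partial sums along the filter of finite subsets *)
Definition totally {I : choiceType} : set_system {fset I} :=
  filter_from setT (fun A => [set B | (A `<=` B)%fset]).

Definition partial_sum {I : choiceType} {V : zmodType}
  (f : I -> V) (F : {fset I}) : V := \sum_(i : F) f (val i).

Definition has_sum {I : choiceType} {V : normedModType R} (f : I -> V) (s : V) :=
  partial_sum f @ totally --> s.

(* rank-one series  sum_i c_i v_i u_i^*  applied to x :  sum_i c_i <u_i,x> v_i *)
Definition rank_one_terms {I : choiceType} (X Y : normedModType R)
  (ipX : X -> X -> R) (c : I -> R) (u : I -> X) (v : I -> Y) (x : X) :=
  fun i => (c i * ipX (u i) x) *: v i.

Definition singular_system {I : choiceType} (X Y : normedModType R)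
  (ipX : X -> X -> R) (ipY : Y -> Y -> R) (A : X -> Y)
  (sigma : I -> R) (u : I -> X) (v : I -> Y) :=
  [/\ (forall i, 0 < sigma i) /\ orthonormal ipX u,
      orthonormal ipY v,
      forall i, A (u i) = sigma i *: v i,
      forall i, adjoint_maps ipX ipY A (v i) (sigma i *: u i)
    & forall x, has_sum (rank_one_terms ipX sigma u v x) (A x)].

Definition op_of {I : choiceType} (X Y : normedModType R)
  (ipX : X -> X -> R) (c : I -> R) (u : I -> X) (v : I -> Y) : X -> Y :=
  fun x => xget 0 [set s | has_sum (rank_one_terms ipX c u v x) s].

Definition classB {I : choiceType} (X Y : normedModType R)
  (ipX : X -> X -> R) (u : I -> X) (v : I -> Y) : set (X -> Y) :=
  [set B | exists beta : I -> R,
     [/\ forall i, 0 <= beta i,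
         exists M : R, forall i, beta i <= M
       & forall x, has_sum (rank_one_terms ipX beta u v x) (B x)]].

Definition tikhonov (X Y : normedModType R) (alpha : R) (B : X -> Y) (y : Y)
  (x : X) : R := 2^-1 * `|B x - y| ^+ 2 + alpha / 2 * `|x| ^+ 2.

Definition xsol (X Y : normedModType R) (alpha : R) (B : X -> Y) (y : Y) : X :=
  xget 0 [set x | forall z, tikhonov alpha B y x <= tikhonov alpha B y z].

Definition Fobj (X Y : normedModType R) (alpha : R) (A B : X -> Y) (yd : Y) : R :=
  2^-1 * `|A (xsol alpha B yd) - yd| ^+ 2.

Definition beta_alpha (alpha s : R) : R :=
  if 2 * Num.sqrt alpha <= s then s / 2 + Num.sqrt (s ^+ 2 / 4 - alpha)
  else Num.sqrt alpha.

End Defs.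

(* Main.v *)
Require Import Defs.
From HB Require Import structures.
From mathcomp Require Import all_boot all_order all_algebra finmap.
From mathcomp Require Import boolp classical_sets functions reals topology normedtype.
From mathcomp Require Import ring lra.
Import Order.TTheory GRing.Theory Num.Theory.
Import numFieldNormedType.Exports.
Local Open Scope classical_set_scope.
Local Open Scope ring_scope.

Section IP.
Context {R : realType} {V : normedModType R} {ip : V -> V -> R}.
Context (hip : is_inner_product ip).

Lemma ipC x y : ip x y = ip y x. Proof. by case: hip. Qed.
Lemma ipLin a x y z : ip (a *: x + y) z = a * ip x z + ip y z. Proof. by case: hip. Qed.
Lemma ipxx x : ip x x = `|x| ^+ 2. Proof. by case: hip. Qed.

Lemma ip0l z : ip 0 z = 0.
Proof. have := ipLin 1 0 0 z; rewrite scale1r addr0 mul1r => h. lra. Qed.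
Lemma ipDl x y z : ip (x + y) z = ip x z + ip y z.
Proof. by rewrite -[x in LHS]scale1r ipLin mul1r. Qed.
Lemma ipZl a x z : ip (a *: x) z = a * ip x z.
Proof. by rewrite -[_ *: _]addr0 ipLin ip0l addr0. Qed.
Lemma ipNl x z : ip (- x) z = - ip x z.
Proof. by rewrite -scaleN1r ipZl mulN1r. Qed.
Lemma ipBl x y z : ip (x - y) z = ip x z - ip y z.
Proof. by rewrite ipDl ipNl. Qed.
Lemma ipDr x y z : ip z (x + y) = ip z x + ip z y.
Proof. by rewrite ipC ipDl ![ip _ z]ipC. Qed.
Lemma ipZr a x z : ip z (a *: x) = a * ip z x.
Proof. by rewrite ipC ipZl ipC. Qed.
Lemma ipBr x y z : ip z (x - y) = ip z x - ip z y.
Proof. by rewrite ipC ipBl ![ip _ z]ipC. Qed.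
Lemma ipNr x z : ip z (- x) = - ip z x.
Proof. by rewrite ipC ipNl ipC. Qed.
Lemma ip0r z : ip z 0 = 0.
Proof. by rewrite ipC ip0l. Qed.

Lemma ip_suml (J : Type) (s : seq J) (P : pred J) (f : J -> V) z :
  ip (\sum_(j <- s | P j) f j) z = \sum_(j <- s | P j) ip (f j) z.
Proof.
elim/big_rec2: _ => [|j a b _ <-]; first exact: ip0l.
by rewrite ipDl.
Qed.
Lemma ip_sumr (J : Type) (s : seq J) (P : pred J) (f : J -> V) z :
  ip z (\sum_(j <- s | P j) f j) = \sum_(j <- s | P j) ip z (f j).
Proof. by rewrite ipC ip_suml; apply: eq_bigr => j _; rewrite ipC. Qed.

Lemma normD2 x y : `|x + y| ^+ 2 = `|x| ^+ 2 + 2 * ip x y + `|y| ^+ 2.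
Proof. rewrite -!ipxx ipDl !ipDr (ipC y x). ring. Qed.

Lemma ip_polar x z : ip x z = 4^-1 * (`|x + z| ^+ 2 - `|x - z| ^+ 2).
Proof.
rewrite normD2 (normD2 x (-z)) normrN ipNr. field. by [].

Qed.

Lemma cvg_ip (T : Type) (F : set_system T) (FF : Filter F) (f : T -> V) (l : V) z :
  f x @[x --> F] --> l -> ip (f x) z @[x --> F] --> ip l z.
Proof.
move=> hf.
have -> : (fun x => ip (f x) z) = (fun x => 4^-1 * (`|f x + z| ^+ 2 - `|f x - z| ^+ 2)).
  by apply: funext => x; rewrite ip_polar.
rewrite ip_polar.
have h1 : `|f x + z| @[x --> F] --> `|l + z|.
  by apply: cvg_norm; apply: cvgD => //; apply: cvg_cst.
have h2 : `|f x - z| @[x --> F] --> `|l - z|.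
  by apply: cvg_norm; apply: cvgB => //; apply: cvg_cst.
apply: cvgM; first exact: cvg_cst.
by rewrite !expr2; apply: cvgB; apply: cvgM.
Qed.

End IP.

Lemma normZ2 {R : realType} {V : normedModType R} {ip : V -> V -> R}
  (hip : is_inner_product ip) (c : R) (x : V) : `|c *: x| ^+ 2 = c ^+ 2 * `|x| ^+ 2.
Proof. by rewrite -!(ipxx hip) (ipZl hip) (ipZr hip) mulrA expr2. Qed.

Lemma totally_filter_proof (I : choiceType) : ProperFilter (@totally I).
Proof.
apply: filter_from_proper; last by move=> A _; exists A; rewrite /= fsubset_refl.
apply: filter_from_filter; first by exists fset0%fset.
move=> A B _ _; exists (A `|` B)%fset => // C /= h; split.
  exact: fsubset_trans (fsubsetUl _ _) h.
exact: fsubset_trans (fsubsetUr _ _) h.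
Qed.
#[global] Existing Instance totally_filter_proof.

Lemma partial_sumE (I : choiceType) (V : zmodType) (f : I -> V) F :
  partial_sum f F = \sum_(i <- F) f i.
Proof. by rewrite /partial_sum (big_seq_fsetE _ _ xpredT). Qed.

Section Sums.
Context {R : realType} {I : choiceType}.

Lemma has_sum_unique {V : normedModType R} {f : I -> V} {s1 s2} :
  has_sum f s1 -> has_sum f s2 -> s1 = s2.
Proof. move=> h1 h2; exact: (cvg_unique _ h1 h2). Qed.

Lemma has_sumD {V : normedModType R} (f g : I -> V) s t :
  has_sum f s -> has_sum g t -> has_sum (fun i => f i + g i) (s + t).
Proof.
move=> hf hg; rewrite /has_sum.
have -> : partial_sum (fun i => f i + g i) = fun F => partial_sum f F + partial_sum g F.
  by apply: funext => F; rewrite !partial_sumE big_split.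
exact: cvgD.
Qed.

Lemma has_sumZ {V : normedModType R} (f : I -> V) (a : R) s :
  has_sum f s -> has_sum (fun i => a *: f i) (a *: s).
Proof.
move=> hf; rewrite /has_sum.
have -> : partial_sum (fun i => a *: f i) = fun F => a *: partial_sum f F.
  by apply: funext => F; rewrite !partial_sumE scaler_sumr.
by apply: cvgZ => //; apply: cvg_cst.
Qed.

Lemma has_sum_ip {V : normedModType R} {ip : V -> V -> R} (hip : is_inner_product ip)
  (f : I -> V) s z :
  has_sum f s -> has_sum (fun i => ip (f i) z) (ip s z).
Proof.
move=> hf; rewrite /has_sum.
have -> : partial_sum (fun i => ip (f i) z) = fun F => ip (partial_sum f F) z.
  by apply: funext => F; rewrite !partial_sumE (ip_suml hip).
exact: (cvg_ip hip).
Qed.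

Lemma has_sum_single {V : normedModType R} (f : I -> V) i :
  (forall j, j != i -> f j = 0) -> has_sum f (f i).
Proof.
move=> h; rewrite /has_sum.
apply: cvg_near_cst.
exists [fset i]%fset => // F /= hF.
rewrite partial_sumE (bigD1_seq i) ?fset_uniq //; last first.
  by rewrite fsub1set in hF.
rewrite big1; first by rewrite [X in X = _]addr0. by move=> j hj; exact: h.
Qed.

Lemma has_sum_ge (f : I -> R) s a :
  has_sum f s -> (forall F, a <= partial_sum f F) -> a <= s.
Proof.
move=> hf hF.
apply: (closed_cvg (fun x : R => a <= x)) hf; first exact: closed_ge.
by apply: nearW.
Qed.

End Sums.

Section ON.
Context {R : realType} {V : normedModType R} {ip : V -> V -> R}.
Context (hip : is_inner_product ip).
Context {I : choiceType} {e : I -> V} (he : Defs.orthonormal ip e).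

Lemma on_ee i j : ip (e i) (e j) = (i == j)%:R.
Proof. rewrite he; case: (eqVneq i j) => [->|/eqP h]; first by rewrite asboolT.
by rewrite asboolF. Qed.

Lemma ip_e_sum (s : seq I) (a : I -> R) i : uniq s -> i \in s ->
  ip (e i) (\sum_(j <- s) a j *: e j) = a i.
Proof.
move=> us iS; rewrite (ip_sumr hip) (bigD1_seq i) //= (ipZr hip) on_ee eqxx mulr1.
rewrite big1 ?addr0 // => j hj.
by rewrite (ipZr hip) on_ee eq_sym (negbTE hj) mulr0.
Qed.

Lemma on_norm2 (s : seq I) (a : I -> R) : uniq s ->
  `|\sum_(i <- s) a i *: e i| ^+ 2 = \sum_(i <- s) a i ^+ 2.
Proof.
move=> us; rewrite -(ipxx hip) (ip_suml hip); rewrite big_seq_cond [RHS]big_seq_cond.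
apply: eq_bigr => i /andP[iS _]; by rewrite (ipZl hip) ip_e_sum // expr2.
Qed.

Lemma bessel (s : seq I) x : uniq s ->
  \sum_(i <- s) ip (e i) x ^+ 2 <= `|x| ^+ 2.
Proof.
move=> us; set w := \sum_(i <- s) ip (e i) x *: e i.
have h1 : `|x - w| ^+ 2 = `|x| ^+ 2 - 2 * ip x w + `|w| ^+ 2.
  by rewrite (normD2 hip) normrN (ipNr hip) mulrN.
have h2 : ip x w = \sum_(i <- s) ip (e i) x ^+ 2.
  rewrite (ip_sumr hip); apply: eq_bigr => i _; rewrite (ipZr hip) (ipC hip) expr2 //.
have h3 : `|w| ^+ 2 = \sum_(i <- s) ip (e i) x ^+ 2 by rewrite on_norm2.
have h4 : 0 <= `|x - w| ^+ 2 by rewrite exprn_ge0.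
lra.
Qed.

End ON.

Lemma on_conv (R : realType) (V : completeNormedModType R) (ip : V -> V -> R)
  (hip : is_inner_product ip) (I : choiceType) (e : I -> V)
  (he : Defs.orthonormal ip e) (a : I -> R) (K : R) :
  (forall F : {fset I}, \sum_(i <- F) a i ^+ 2 <= K) ->
  exists l, has_sum (fun i => a i *: e i) l.
Proof.
move=> hK.
pose E := [set r | exists F : {fset I}, r = \sum_(i <- F) a i ^+ 2].
have hE : has_sup E.
  split; first by exists (\sum_(i <- fset0) a i ^+ 2); exists fset0%fset.
  by exists K => r [F ->].
have : cvg (partial_sum (fun i => a i *: e i) @ totally).
  apply: cauchy_cvg; apply: cauchy_exP => eps heps.
  have heps2 : 0 < eps * eps by rewrite mulr_gt0.
  have [r [F0 ->] hr] := sup_adherent heps2 hE.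
  exists (partial_sum (fun i => a i *: e i) F0).
  exists F0 => // G /= hG.
  rewrite !partial_sumE.
  pose D := [fset x in G | x \notin F0]%fset.
  have hsplit (W : zmodType) (f : I -> W) :
      \sum_(i <- G) f i = \sum_(i <- F0) f i + \sum_(i <- D) f i.
    rewrite (big_fsetID _ (mem F0)) /=; congr (_ + _).
    apply: eq_fbigl => i; rewrite !inE /=.
    by apply/andP/idP => [[]//|h]; split => //; exact: (fsubsetP hG).
  rewrite hsplit -ball_normE /ball_ /= opprD addrA subrr sub0r normrN.
  have hn : `|\sum_(i <- D) a i *: e i| ^+ 2 < eps * eps.
    rewrite (on_norm2 hip he) ?fset_uniq //.
    have := hsplit R (fun i => a i ^+ 2).
    have : \sum_(i <- G) a i ^+ 2 <= sup E.
      by apply: sup_upper_bound => //; exists G.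
    lra.
  have hn0 := normr_ge0 (\sum_(i <- D) a i *: e i).
  rewrite expr2 in hn.
  case: (ltrP (`|\sum_(i <- D) a i *: e i|) eps) => // h.
  have : eps * eps <= `|\sum_(i <- D) a i *: e i| * `|\sum_(i <- D) a i *: e i|.
    by apply: ler_pM => //; apply: ltW.
  lra.
move=> hc; exists (lim (partial_sum (fun i => a i *: e i) @ totally)); exact: hc.
Qed.

Lemma beta_alpha_props {R : realType} {alpha s : R} : 0 < alpha -> 0 < s ->
  0 < beta_alpha alpha s /\ beta_alpha alpha s <= Num.max s (Num.sqrt alpha).
Proof.
move=> ha hs; rewrite /beta_alpha.
have r0 : 0 < Num.sqrt alpha by rewrite sqrtr_gt0.
case: ifP => h.
  have hx : 0 <= s ^+ 2 / 4 - alpha.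
    have hr2 := sqr_sqrtr (ltW ha). nra.
  have q0 := sqrtr_ge0 (s ^+ 2 / 4 - alpha).
  have q2 := sqr_sqrtr hx.
  split; first lra.
  rewrite le_max; apply/orP; left. nra.
split => //; rewrite le_max lexx orbT //.
Qed.

Lemma scalar_key (R : realType) (alpha sigma beta c a1 a2 : R) :
  0 < alpha -> 0 < sigma -> 0 <= beta ->
  a1 * (beta ^+ 2 + alpha) = beta * c ->
  a2 * (beta_alpha alpha sigma ^+ 2 + alpha) = beta_alpha alpha sigma * c ->
  (sigma * a2 - c) ^+ 2 <= (sigma * a1 - c) ^+ 2.
Proof.
move=> ha hs hb h1 h2.
have [bp _] := beta_alpha_props ha hs.
move: h2 bp; rewrite /beta_alpha.
have r0 : 0 < Num.sqrt alpha by rewrite sqrtr_gt0.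
have hr2 := sqr_sqrtr (ltW ha).
case: ifP => h h2 bp.
  have hx : 0 <= sigma ^+ 2 / 4 - alpha by nra.
  set q := Num.sqrt (sigma ^+ 2 / 4 - alpha) in h2 bp.
  have q2 : q ^+ 2 = sigma ^+ 2 / 4 - alpha by rewrite sqr_sqrtr.
  have e : sigma * a2 = c.
    have : (sigma / 2 + q) * (sigma * a2 - c) = 0.
      have -> : (sigma / 2 + q) * (sigma * a2 - c) =
        a2 * ((sigma / 2 + q) ^+ 2 + alpha) - (sigma / 2 + q) * c.
        rewrite -[X in _ = _ * (X ^+ 2 + _) - _]/(sigma / 2 + q).
        have -> : (sigma / 2 + q) ^+ 2 = sigma ^+ 2 / 4 + sigma * q + q ^+ 2 by field.
        by rewrite q2; field.
      by rewrite h2 subrr.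
    move/eqP; rewrite mulf_eq0 => /orP[/eqP|/eqP]; first lra.
    move=> hh; lra.
  rewrite e subrr expr0n /=; exact: sqr_ge0.
set r := Num.sqrt alpha in h2 bp r0 hr2.
have hlt : sigma < 2 * r by move/negbT: h; rewrite -ltNge.
have e2 : a2 * (2 * r) = c.
  have : r * (a2 * (2 * r) - c) = 0.
    have -> : r * (a2 * (2 * r) - c) = a2 * (r ^+ 2 + alpha) - r * c by rewrite -hr2; ring.
    by rewrite h2 subrr.
  move/eqP; rewrite mulf_eq0 => /orP[/eqP|/eqP]; first lra.
  move=> hh; lra.
have hD : 0 < beta ^+ 2 + alpha by nra.
have e1 : a1 = beta * c / (beta ^+ 2 + alpha).
  by rewrite -h1; field; apply/eqP; lra.
have e2' : a2 = c / (2 * r) by rewrite -e2; field; apply/eqP; lra.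
set h' := sigma * beta / (beta ^+ 2 + alpha).
set k := sigma / (2 * r).
have E1 : sigma * a1 - c = c * (h' - 1) by rewrite e1 /h'; field; apply/eqP; lra.
have E2 : sigma * a2 - c = c * (k - 1) by rewrite e2' /k; field; apply/eqP; lra.
have hk1 : k < 1 by rewrite /k ltr_pdivrMr; nra.
have hk0 : 0 < k by rewrite /k divr_gt0 //; nra.
have hhk : h' <= k.
  rewrite /h' /k ler_pdivrMr // mulrAC ler_pdivlMr; last nra.
  have : 0 <= (beta - r) ^+ 2 by exact: sqr_ge0.
  nra.
rewrite E1 E2 !exprMn.
apply: ler_wpM2l; first exact: sqr_ge0.
have h0 : 0 <= sigma * beta / (beta ^+ 2 + alpha) by apply: divr_ge0; nra.
rewrite -/h' in h0.
nra.
Qed.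

Section Coef.
Context {R : realType} {V : normedModType R} {ip : V -> V -> R}.
Context (hip : is_inner_product ip).
Context {I : choiceType} {e : I -> V} (he : Defs.orthonormal ip e).

Lemma has_sum_ip_exp (a : I -> R) s z :
  has_sum (fun j => a j *: e j) s -> has_sum (fun j => a j * ip (e j) z) (ip s z).
Proof.
move=> h; have := has_sum_ip hip _ _ z h.
by have -> : (fun i => ip (a i *: e i) z) = (fun j => a j * ip (e j) z)
  by apply: funext => j; rewrite (ipZl hip).
Qed.

Lemma coef_ext (a : I -> R) s i :
  has_sum (fun j => a j *: e j) s -> ip s (e i) = a i.
Proof.
move=> /(has_sum_ip_exp _ _ (e i)) h.
have h2 : has_sum (fun j => a j * ip (e j) (e i)) (a i * ip (e i) (e i)).
  apply: has_sum_single => j hj; by rewrite (on_ee he) (negbTE hj) mulr0.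
by rewrite (has_sum_unique h h2) (on_ee he) eqxx mulr1.
Qed.

End Coef.

Lemma has_sum0 {R : realType} {I : choiceType} {V : normedModType R} :
  has_sum (fun _ : I => (0 : V)) 0.
Proof.
rewrite /has_sum.
have -> : partial_sum (fun _ : I => (0 : V)) = fun _ => 0.
  by apply: funext => F; rewrite partial_sumE big1.
exact: cvg_cst.
Qed.

Section BL.
Context {R : realType} {X Y : normedModType R} {ipX : X -> X -> R} {ipY : Y -> Y -> R}.
Context (hX : is_inner_product ipX) (hY : is_inner_product ipY).
Context {I : choiceType} {u : I -> X} {v : I -> Y}.
Context (hu : Defs.orthonormal ipX u) (hv : Defs.orthonormal ipY v).
Context {B : X -> Y} {beta : I -> R}.
Context (hB : forall x, has_sum (rank_one_terms ipX beta u v x) (B x)).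

Lemma Bcoef x i : ipY (B x) (v i) = beta i * ipX (u i) x.
Proof. exact: (coef_ext hY hv (fun j => beta j * ipX (u j) x) (B x) i (hB x)). Qed.

Lemma Badd x w : B (x + w) = B x + B w.
Proof.
apply: (has_sum_unique (hB (x + w))).
have -> : rank_one_terms ipX beta u v (x + w) =
  (fun i => rank_one_terms ipX beta u v x i + rank_one_terms ipX beta u v w i).
  by apply: funext => i; rewrite /rank_one_terms (ipDr hX) mulrDr scalerDl.
exact: has_sumD.
Qed.

Lemma BZ t x : B (t *: x) = t *: B x.
Proof.
apply: (has_sum_unique (hB (t *: x))).
have -> : rank_one_terms ipX beta u v (t *: x) =
  (fun i => t *: rank_one_terms ipX beta u v x i).
  by apply: funext => i; rewrite /rank_one_terms (ipZr hX) scalerA mulrCA.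
exact: has_sumZ.
Qed.

Lemma Bu i : B (u i) = beta i *: v i.
Proof.
apply: (has_sum_unique (hB (u i))).
have := @has_sum_single R I Y (rank_one_terms ipX beta u v (u i)) i.
rewrite /rank_one_terms (on_ee hu) eqxx mulr1; apply => j hj.
by rewrite (on_ee hu) (negbTE hj) mulr0 scale0r.
Qed.

Lemma min_coef (alpha : R) (halpha : 0 < alpha) (yd : Y) x
  (hmin : forall z, tikhonov alpha B yd x <= tikhonov alpha B yd z) i :
  ipX (u i) x * (beta i ^+ 2 + alpha) = beta i * ipY (v i) yd.
Proof.
set a := ipX (u i) x; set c := ipY (v i) yd; set b := beta i.
set L := a * (b ^+ 2 + alpha) - b * c.
have nv : `|v i| ^+ 2 = 1 by rewrite -(ipxx hY) (on_ee hv) eqxx.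
have nu : `|u i| ^+ 2 = 1 by rewrite -(ipxx hX) (on_ee hu) eqxx.
have key t : 0 <= t * L + t ^+ 2 * (b ^+ 2 + alpha) / 2.
  have := hmin (x + t *: u i); rewrite /tikhonov Badd BZ Bu scalerA.
  have -> : B x + (t * b) *: v i - yd = (B x - yd) + (t * b) *: v i.
    by rewrite addrAC.
  rewrite (normD2 hY (B x - yd)) (normD2 hX x) (normZ2 hY) (normZ2 hX) nv nu.
  rewrite (ipZr hY) (ipZr hX) (ipBl hY) Bcoef (ipC hY yd) (ipC hX x) -/a -/c -/b.
  rewrite /L; lra.
have hD : 0 < b ^+ 2 + alpha by rewrite ltr_pwDr // sqr_ge0.
have := key (- L / (b ^+ 2 + alpha)).
have e : - L / (b ^+ 2 + alpha) * (b ^+ 2 + alpha) = - L.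
  by rewrite mulfVK //; apply/eqP; lra.
move: e; set t := - L / (b ^+ 2 + alpha) => e h.
have hL : L = 0 by nra.
by move: hL; rewrite /L => /eqP; rewrite subr_eq0 => /eqP.
Qed.

End BL.

Section EX.
Context {R : realType} {X Y : completeNormedModType R} {ipX : X -> X -> R} {ipY : Y -> Y -> R}.
Context (hX : is_inner_product ipX) (hY : is_inner_product ipY).
Context {I : choiceType} {u : I -> X} {v : I -> Y}.
Context (hu : Defs.orthonormal ipX u) (hv : Defs.orthonormal ipY v).

Lemma exists_min (B : X -> Y) (beta : I -> R) (hb0 : forall i, 0 <= beta i) (M : R)
  (hM : forall i, beta i <= M)
  (hB : forall x, has_sum (rank_one_terms ipX beta u v x) (B x))
  (alpha : R) (halpha : 0 < alpha) (yd : Y) :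
  exists x, forall z, tikhonov alpha B yd x <= tikhonov alpha B yd z.
Proof.
pose g j := beta j / (beta j ^+ 2 + alpha) * ipY (v j) yd.
have hg j : g j * (beta j ^+ 2 + alpha) = beta j * ipY (v j) yd.
  have hD : 0 < beta j ^+ 2 + alpha by rewrite ltr_pwDr // sqr_ge0.
  by rewrite /g mulrAC mulfVK // lt0r_neq0.
have hK : forall F : {fset I}, \sum_(i <- F) g i ^+ 2 <= (`|M| / alpha) ^+ 2 * `|yd| ^+ 2.
  move=> F; apply: (@le_trans _ _ ((`|M| / alpha) ^+ 2 * \sum_(i <- F) ipY (v i) yd ^+ 2)).
    rewrite mulr_sumr; apply: ler_sum => j _.
    set k := beta j / (beta j ^+ 2 + alpha).
    have hD : 0 < beta j ^+ 2 + alpha by rewrite ltr_pwDr // sqr_ge0.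
    have k0 : 0 <= k by rewrite /k divr_ge0 // ltW.
    have kD : k * (beta j ^+ 2 + alpha) = beta j by rewrite /k mulfVK // lt0r_neq0.
    have bM : beta j <= `|M| by apply: le_trans (hM j) (ler_norm M).
    have kM : k <= `|M| / alpha.
      rewrite ler_pdivlMr //; have := sqr_ge0 (beta j); nra.
    rewrite /g -/k exprMn; apply: ler_wpM2r; first exact: sqr_ge0.
    by rewrite !expr2; apply: ler_pM.
  apply: ler_wpM2l; first exact: sqr_ge0.
  exact: (bessel hY hv _ yd (fset_uniq F)).
have [xs hxs] := @on_conv _ _ _ hX _ _ hu _ _ hK.
have cx j : ipX (u j) xs = g j by rewrite (ipC hX); exact: (coef_ext hX hu _ _ _ hxs).
exists xs => z.
set w := z - xs.
have -> : z = xs + w by rewrite /w addrC subrK.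
rewrite /tikhonov (Badd hX hB).
have -> : B xs + B w - yd = (B xs - yd) + B w by rewrite addrAC.
rewrite (normD2 hY (B xs - yd)) (normD2 hX xs).
have G : ipY (B xs - yd) (B w) + ipX xs (alpha *: w) = 0.
  have h1 := has_sum_ip_exp hY _ _ (B xs - yd) (hB w).
  have h2 := has_sum_ip_exp hX _ _ (alpha *: w) hxs.
  have h3 := has_sumD _ _ _ _ h1 h2.
  rewrite (ipC hY); apply: (has_sum_unique h3).
  have -> : (fun i => beta i * ipX (u i) w * ipY (v i) (B xs - yd) + g i * ipX (u i) (alpha *: w))
      = (fun _ => 0).
    apply: funext => j; rewrite (ipBr hY) (ipC hY (v j) (B xs)) (Bcoef hY hv hB) cx.
    rewrite (ipZr hX).
    have := hg j; set c := ipY (v j) yd; set b := beta j; set q := ipX (u j) w.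
    move=> hgj.
    have -> : b * q * (b * g j - c) + g j * (alpha * q) = q * (g j * (b ^+ 2 + alpha) - b * c) by ring.
    by rewrite hgj subrr mulr0.
  exact: has_sum0.
move: G; rewrite (ipZr hX) => G.
rewrite -subr_ge0.
set P := ipY (B xs - yd) (B w); set Q := ipX xs w.
have -> : 2^-1 * (`|B xs - yd| ^+ 2 + 2 * P + `|B w| ^+ 2) +
  alpha / 2 * (`|xs| ^+ 2 + 2 * Q + `|w| ^+ 2) -
  (2^-1 * `|B xs - yd| ^+ 2 + alpha / 2 * `|xs| ^+ 2) =
  2^-1 * `|B w| ^+ 2 + alpha / 2 * `|w| ^+ 2 + (P + alpha * Q) by field.
rewrite G addr0; apply: addr_ge0; apply: mulr_ge0; rewrite ?sqr_ge0 //.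
  by rewrite invr_ge0.
by rewrite divr_ge0 // ltW.
Qed.

End EX.

Lemma sigma_bounded {R : realType} {X Y : completeNormedModType R}
  {ipX : X -> X -> R} {ipY : Y -> Y -> R}
  (hX : is_inner_product ipX) (hY : is_inner_product ipY)
  {A : {linear X -> Y}} (hAcont : continuous A)
  {I : countType} {sigma : I -> R} {u : I -> X} {v : I -> Y}
  (hsv : singular_system ipX ipY A sigma u v) :
  exists S, forall i, sigma i <= S.
Proof.
case: hsv => [[hs hu] hv hAu hadj hAs].
have := cvgr_dist_lt _ _ (hAcont 0) 1 (@ltr01 R).
rewrite linear0 => h.
have {h} : \forall t \near nbhs (0:X), `|0 - A t| < 1 by apply: h; exact: nbhs_filter.
move=> /nbhs_ballP [d /= d0 hd].
exists (2 / d) => i.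
have nu : `|u i| = 1.
  have : `|u i| ^+ 2 = 1 by rewrite -(ipxx hX) (on_ee hu) eqxx.
  have := normr_ge0 (u i); nra.
have nv : `|v i| = 1.
  have : `|v i| ^+ 2 = 1 by rewrite -(ipxx hY) (on_ee hv) eqxx.
  have := normr_ge0 (v i); nra.
have := hd ((d / 2) *: u i).
rewrite -ball_normE /ball_ /= sub0r normrN normrZ nu mulr1 linearZ /= hAu.
rewrite sub0r normrN normrZ (ger0_norm (ltW d0)) ger0_norm ?invr_ge0 ?ler0n //.
rewrite scalerA normrZ nv mulr1 ger0_norm; last first.
  by apply: mulr_ge0; [apply: divr_ge0; rewrite ?ltW | exact: ltW (hs i)].
move=> h; have : d / 2 < d by lra.
move=> /h hh; rewrite ler_pdivlMr //; have := hs i; nra.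
Qed.

Theorem theorem1 (R : realType) (X Y : completeNormedModType R)
  (ipX : X -> X -> R) (ipY : Y -> Y -> R)
  (hX : is_inner_product ipX) (hY : is_inner_product ipY)
  (A : {linear X -> Y}) (hAcont : continuous A) (hAcomp : compact_operator A)
  (I : countType) (sigma : I -> R) (u : I -> X) (v : I -> Y)
  (hsv : singular_system ipX ipY A sigma u v)
  (alpha : R) (halpha : 0 < alpha) (yd : Y) :
  let Balpha := op_of ipX (fun i => beta_alpha alpha (sigma i)) u v in
  classB ipX u v Balpha /\
  (forall B, classB ipX u v B -> Fobj alpha A Balpha yd <= Fobj alpha A B yd).
Proof.
move=> Balpha.
have [S hS] := sigma_bounded hX hY hAcont hsv.
case: hsv => [[hs hu] hv hAu hadj hAs].
pose ba i := beta_alpha alpha (sigma i).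
pose Mb := S + Num.sqrt alpha.
have hba i : 0 < ba i /\ ba i <= Mb.
  have [h1 h2] := beta_alpha_props halpha (hs i).
  split => //; move: h2; rewrite le_max => /orP[] h.
    have := hS i; have := sqrtr_ge0 alpha; move: h; rewrite /Mb /ba; lra.
  have := hS i; have := hs i; move: h; rewrite /Mb /ba; lra.
have hBa : forall x, has_sum (rank_one_terms ipX ba u v x) (Balpha x).
  move=> x; rewrite /Balpha /op_of; apply: xgetPex.
  have hK : forall F : {fset I}, \sum_(i <- F) (ba i * ipX (u i) x) ^+ 2 <= Mb ^+ 2 * `|x| ^+ 2.
    move=> F; apply: (@le_trans _ _ (Mb ^+ 2 * \sum_(i <- F) ipX (u i) x ^+ 2)).
      rewrite mulr_sumr; apply: ler_sum => j _; rewrite exprMn.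
      apply: ler_wpM2r; first exact: sqr_ge0.
      have [h1 h2] := hba j; rewrite !expr2; apply: ler_pM => //; exact: ltW.
    apply: ler_wpM2l; first exact: sqr_ge0.
    exact: (bessel hX hu _ x (fset_uniq F)).
  exact: (@on_conv _ _ _ hY _ _ hv _ _ hK).
have cBa : classB ipX u v Balpha.
  exists ba; split => //; first by move=> i; have [h _] := hba i; exact: ltW.
  by exists Mb => i; have [_ h] := hba i.
split => // B [beta [hb0 [M hM] hB]].
have hx1 : forall z, tikhonov alpha B yd (xsol alpha B yd) <= tikhonov alpha B yd z :=
  xgetPex 0 (exists_min hX hY hu hv B beta hb0 M hM hB alpha halpha yd).
have hx2 : forall z, tikhonov alpha Balpha yd (xsol alpha Balpha yd) <= tikhonov alpha Balpha yd z :=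
  xgetPex 0 (exists_min hX hY hu hv Balpha ba
  (fun i => ltW (hba i).1) Mb (fun i => (hba i).2) hBa alpha halpha yd).
rewrite /Fobj; apply: ler_wpM2l; first by rewrite invr_ge0.
set x1 := xsol alpha B yd in hx1 *; set x2 := xsol alpha Balpha yd in hx2 *.
have c1 := min_coef hX hY hu hv hB alpha halpha yd _ hx1.
have c2 := min_coef hX hY hu hv hBa alpha halpha yd _ hx2.
set w2 := A x2 - yd; set z := x1 - x2.
have -> : A x1 - yd = w2 + A z by rewrite /w2 /z linearB /= [RHS]addrC -addrA addKr.
rewrite (normD2 hY w2 (A z)).
have hs1 := has_sum_ip_exp hY _ _ w2 (hAs z).
have hge : - (2^-1 * `|A z| ^+ 2) <= ipY (A z) w2.
  apply: (has_sum_ge _ _ _ hs1) => F; rewrite partial_sumE.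
  have hb := bessel hY hv _ (A z) (fset_uniq F).
  have hcv j : ipY (v j) (A z) = sigma j * ipX (u j) z.
    by rewrite (ipC hY) hadj (ipZr hX) (ipC hX).
  have hw j : ipY (v j) w2 = sigma j * ipX (u j) x2 - ipY (v j) yd.
    by rewrite /w2 (ipBr hY) (ipC hY _ (A x2)) hadj (ipZr hX) (ipC hX).
  have hterm j : 0 <= sigma j * ipX (u j) z * ipY (v j) w2 + 2^-1 * ipY (v j) (A z) ^+ 2.
    rewrite hcv hw /z (ipBr hX).
    have := @scalar_key _ _ _ _ _ _ _ halpha (hs j) (hb0 j) (c1 j) (c2 j).
    set a1 := ipX (u j) x1; set a2 := ipX (u j) x2; set c := ipY (v j) yd.
    set s := sigma j; move=> key.
    have -> : s * (a1 - a2) * (s * a2 - c) + 2^-1 * (s * (a1 - a2)) ^+ 2 =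
      2^-1 * ((s * a1 - c) ^+ 2 - (s * a2 - c) ^+ 2) by field.
    apply: mulr_ge0; first by rewrite invr_ge0.
    by rewrite subr_ge0.
  have : 0 <= \sum_(j <- F) (sigma j * ipX (u j) z * ipY (v j) w2 + 2^-1 * ipY (v j) (A z) ^+ 2).
    exact: sumr_ge0.
  rewrite big_split /= -mulr_sumr.
  set T1 := \sum_(j <- F) _; set T2 := \sum_(j <- F) _.
  move: hb; rewrite -/T2 => hb.
  lra.
rewrite (ipC hY w2).
have := sqr_ge0 `|w2|.
lra.
Qed.
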